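(* Let $G$ be a group. Call a finite subset $A\subseteq G$ \emph{strongly independent} if no subgroup of $G$ containing $A$ can be generated by fewer than $|A|$ elements. Then: (i) every subset of a finite strongly independent subset of $G$ is strongly independent, so the finite strongly independent subsets form a simplicial complex (the \emph{strong independence complex} of $G$); (ii) for $g\in G$, $\{g\}$ is strongly independent if and only if $g\neq 1$, so the vertices of this complex are exactly the non-identity elements of $G$; (iii) the $1$-skeleton of the strong independence complex is the complement of the enhanced power graph of $G$; that is, for distinct non-identity $x,y\in G$, the set $\{x,y\}$ is strongly independent if and only if $\langle x,y\rangle$ is not cyclic.
   Context: A simplicial complex on a set $X$ is a downward-closed collection of finite subsets (simplices) of $X$; its $1$-skeleton is the graph formed by the simplices of cardinality at most $2$. The enhanced power graph of $G$ is the graph on $G$ in which $x$ and $y$ are adjacent if and only if $\langle x,y\rangle$ is a cyclic group. *)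

(* Defs.v *)
From Stdlib Require Import List Arith.
Import ListNotations.

Record Group (T : Type) : Type := {
  gmul : T -> T -> T;
  gone : T;
  ginv : T -> T;
  gmulA : forall x y z, gmul x (gmul y z) = gmul (gmul x y) z;
  gmul1l : forall x, gmul gone x = x;
  gmulVl : forall x, gmul (ginv x) x = gone
}.
Arguments gmul {T} g _ _.
Arguments gone {T} g.
Arguments ginv {T} g _.

Section GroupDefs.
Variables (T : Type) (G : Group T).

Definition is_subgroup (H : T -> Prop) : Prop :=
  H (gone G) /\ (forall x y, H x -> H y -> H (gmul G x y)) /\
  (forall x, H x -> H (ginv G x)).

Definition gen (S : T -> Prop) : T -> Prop :=
  fun x => forall H, is_subgroup H -> (forall y, S y -> H y) -> H x.

Definition generated_by (H : T -> Prop) (l : list T) : Prop :=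
  forall x, H x <-> gen (fun y => In y l) x.

(* Finite subsets of G are duplicate-free lists; |A| = length A.
   A is strongly independent if no subgroup containing A can be generated
   by fewer than |A| elements. *)
Definition strongly_independent (A : list T) : Prop :=
  NoDup A /\
  forall H, is_subgroup H -> (forall a, In a A -> H a) ->
    ~ (exists l : list T, length l < length A /\ generated_by H l).

Definition cyclic_subgroup (H : T -> Prop) : Prop :=
  exists g, generated_by H [g].

Definition enhanced_power_adj (x y : T) : Prop :=
  cyclic_subgroup (gen (fun z => In z [x; y])).

End GroupDefs.
Arguments is_subgroup {T} G H.
Arguments gen {T} G S _.
Arguments generated_by {T} G H l.
Arguments strongly_independent {T} G A.
Arguments cyclic_subgroup {T} G H.
Arguments enhanced_power_adj {T} G x y.

(* Main.v *)
Require Import Defs.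
From Stdlib Require Import List Arith.
From Stdlib Require Import ZArith Lia ClassicalEpsilon.
Import ListNotations.

Section Aux.
Variables (T : Type) (G : Group T).
Local Notation "x * y" := (gmul G x y).
Local Notation one := (gone G).
Local Notation "x ^-1" := (ginv G x) (at level 2).

Lemma mulV x : x * x^-1 = one.
Proof.
  rewrite <- (gmul1l _ G (x * x^-1)).
  rewrite <- (gmulVl _ G (x^-1)) at 1.
  rewrite <- (gmulA _ G). rewrite (gmulA _ G (x^-1) x (x^-1)), (gmulVl _ G), (gmul1l _ G).
  apply (gmulVl _ G).
Qed.

Lemma mul1r x : x * one = x.
Proof. rewrite <- (gmulVl _ G x), (gmulA _ G), mulV. apply (gmul1l _ G). Qed.

Lemma inv_uniq a b : b * a = one -> a^-1 = b.
Proof.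
  intro H. rewrite <- (mul1r b), <- (mulV a), (gmulA _ G), H. rewrite (gmul1l _ G); reflexivity.
Qed.

Lemma inv1 : one^-1 = one.
Proof. apply inv_uniq. apply (gmul1l _ G). Qed.

Lemma gen_sub (S : T -> Prop) : is_subgroup G (gen G S).
Proof.
  split; [|split].
  - intros H [h1 _] _. exact h1.
  - intros x y hx hy H hH hS. destruct hH as [h1 [hm hi]].
    apply hm; [apply hx|apply hy]; try split; auto.
  - intros x hx H hH hS. destruct hH as [h1 [hm hi]].
    apply hi; apply hx; try split; auto.
Qed.

Lemma gen_in (S : T -> Prop) x : S x -> gen G S x.
Proof. intros hx H _ hS. auto. Qed.

Lemma gen_min (S K : T -> Prop) : is_subgroup G K -> (forall y, S y -> K y) ->
  forall x, gen G S x -> K x.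
Proof. intros hK hS x hx. apply hx; auto. Qed.

Lemma triv_sub : is_subgroup G (fun x => x = one).
Proof.
  split; [reflexivity|split].
  - intros x y -> ->. apply (gmul1l _ G).
  - intros x ->. apply inv1.
Qed.

Lemma gen_nil x : gen G (fun y => In y []) x -> x = one.
Proof. intro h. apply (gen_min (fun y => In y []) _ triv_sub); [intros y []|exact h]. Qed.

Fixpoint npow (g : T) (n : nat) : T :=
  match n with O => one | S k => npow g k * g end.

Definition zpow (g : T) (z : Z) : T :=
  if Z.leb 0 z then npow g (Z.to_nat z) else npow (g^-1) (Z.to_nat (- z)).

Lemma zpow0 g : zpow g 0 = one.
Proof. reflexivity. Qed.

Lemma zpow1 g : zpow g 1 = g.
Proof. unfold zpow. simpl. apply (gmul1l _ G). Qed.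

Lemma zpow_succ g z : zpow g (Z.succ z) = zpow g z * g.
Proof.
  unfold zpow. destruct (Z.leb_spec 0 z).
  - destruct (Z.leb_spec 0 (Z.succ z)); [|lia].
    replace (Z.to_nat (Z.succ z)) with (S (Z.to_nat z)) by lia. reflexivity.
  - replace (Z.to_nat (- z)) with (S (Z.to_nat (- Z.succ z))) by lia.
    simpl. rewrite <- (gmulA _ G), (gmulVl _ G), mul1r.
    destruct (Z.leb_spec 0 (Z.succ z)).
    + replace (Z.succ z) with 0%Z by lia. reflexivity.
    + reflexivity.
Qed.

Lemma zpow_pred g z : zpow g (Z.pred z) = zpow g z * g^-1.
Proof.
  rewrite <- (Z.succ_pred z) at 2. rewrite zpow_succ, <- (gmulA _ G), mulV, mul1r.
  reflexivity.
Qed.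

Lemma zpow_add g m n : zpow g (m + n) = zpow g m * zpow g n.
Proof.
  induction n using Z.peano_ind.
  - rewrite Z.add_0_r, zpow0, mul1r. reflexivity.
  - rewrite Z.add_succ_r, !zpow_succ, IHn, (gmulA _ G). reflexivity.
  - rewrite Z.add_pred_r, !zpow_pred, IHn, (gmulA _ G). reflexivity.
Qed.

Lemma zpow_inv g n : (zpow g n)^-1 = zpow g (- n).
Proof. apply inv_uniq. rewrite <- zpow_add, Z.add_opp_diag_l. reflexivity. Qed.

Lemma zpow_mul g m n : zpow (zpow g m) n = zpow g (m * n).
Proof.
  induction n using Z.peano_ind.
  - rewrite Z.mul_0_r. reflexivity.
  - rewrite zpow_succ, IHn, Z.mul_succ_r, zpow_add. reflexivity.
  - rewrite zpow_pred, IHn, Z.mul_pred_r, zpow_inv, <- zpow_add.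
    reflexivity.
Qed.

Lemma zpow_in (K : T -> Prop) g : is_subgroup G K -> K g -> forall n, K (zpow g n).
Proof.
  intros [h1 [hm hi]] hg n. induction n using Z.peano_ind.
  - exact h1.
  - rewrite zpow_succ. auto.
  - rewrite zpow_pred. auto.
Qed.

Lemma gen1 g x : gen G (fun y => In y [g]) x <-> exists n, x = zpow g n.
Proof.
  split.
  - intro h. apply (gen_min (fun y => In y [g]) (fun x => exists n, x = zpow g n)); [| |exact h].
    + split; [exists 0%Z; reflexivity|split].
      * intros a b [m ->] [n ->]. exists (m + n)%Z. symmetry. apply zpow_add.
      * intros a [m ->]. exists (- m)%Z. apply zpow_inv.
    + intros y [<-|[]]. exists 1%Z. symmetry. apply zpow1.
  - intros [n ->]. apply zpow_in. apply gen_sub. apply gen_in. left; reflexivity.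
Qed.

Lemma cyc_two x y g :
  (exists a, x = zpow g a) -> (exists b, y = zpow g b) ->
  cyclic_subgroup G (gen G (fun z => In z [x; y])).
Proof.
  intros [a ->] [b ->].
  set (d := Z.gcd a b).
  destruct (Z.gcd_bezout a b d eq_refl) as [u [v huv]].
  destruct (Z.gcd_divide_l a b) as [a' ha]. destruct (Z.gcd_divide_r a b) as [b' hb].
  exists (zpow g d). intro z. split.
  - apply gen_min. apply gen_sub. intros w [<-|[<-|[]]]; apply gen1.
    + exists a'. rewrite zpow_mul. f_equal. fold d in ha. lia.
    + exists b'. rewrite zpow_mul. f_equal. fold d in hb. lia.
  - apply gen_min. apply gen_sub. intros w [<-|[]].
    rewrite <- huv, zpow_add, (Z.mul_comm u), (Z.mul_comm v), <- !zpow_mul.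
    destruct (gen_sub (fun z => In z [zpow g a; zpow g b])) as [_ [hm _]].
    apply hm; apply (zpow_in (gen G (fun z => In z [zpow g a; zpow g b]))); try apply gen_sub; apply gen_in; simpl; auto.
Qed.

Definition inb (B : list T) (a : T) : bool :=
  if excluded_middle_informative (In a B) then true else false.

Lemma filter_len (p : T -> bool) (A : list T) :
  length (filter p A) + length (filter (fun a => negb (p a)) A) = length A.
Proof.
  induction A; simpl; auto. destruct (p a); simpl; lia.
Qed.

End Aux.

Theorem mainTheorem2 (T : Type) (G : Group T) :
  (* (i) downward closure: subsets of strongly independent sets *)
  (forall A B : list T, strongly_independent G A -> NoDup B ->
     (forall b, In b B -> In b A) -> strongly_independent G B)
  (* (ii) vertices are exactly the non-identity elements *)
  /\ (forall g : T, strongly_independent G [g] <-> g <> gone G)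
  (* (iii) 1-skeleton = complement of the enhanced power graph *)
  /\ (forall x y : T, x <> gone G -> y <> gone G -> x <> y ->
       (strongly_independent G [x; y] <-> ~ enhanced_power_adj G x y)).
Proof.
  split; [|split].
  - intros A B [_ hA] hB hsub. split; [exact hB|].
    intros H hH hBH [l [hl hgen]].
    set (C := filter (fun a => negb (inb T B a)) A).
    apply (hA (gen G (fun z => In z (l ++ C))) (gen_sub _ _ _)).
    + intros a ha. unfold inb in *.
      destruct (excluded_middle_informative (In a B)) as [i|n].
      * apply (gen_min _ G (fun y => In y l)). apply gen_sub.
        intros y hy. apply gen_in. apply in_or_app; auto.
        apply hgen. auto.
      * apply gen_in. apply in_or_app. right. unfold C. apply filter_In.
        split; auto. unfold inb.
        destruct (excluded_middle_informative (In a B)); [contradiction|reflexivity].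
    + exists (l ++ C). split; [|intro; reflexivity].
      rewrite length_app.
      assert (length B <= length (filter (inb T B) A)).
      { apply NoDup_incl_length; auto. intros b hb. apply filter_In. split; auto.
        unfold inb. destruct (excluded_middle_informative (In b B)); auto. }
      pose proof (filter_len T (inb T B) A). unfold C. lia.
  - intro g. split.
    + intros [_ h] e. apply (h (gen G (fun z => In z []))).
      * apply gen_sub.
      * intros a [<-|[]]. rewrite e. apply (gen_sub _ _ _).
      * exists []. split; [simpl; lia|intro; reflexivity].
    + intro ne. split; [constructor; [intros []|constructor]|].
      intros H hH hg [l [hl hgen]]. destruct l; [|simpl in hl; lia].
      apply ne. apply (gen_nil T G). apply hgen. apply hg. left; reflexivity.
  - intros x y hx hy hxy. split.
    + intros [_ h] [g hg]. apply (h _ (gen_sub _ G (fun z => In z [x; y]))).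
      * intros a ha. apply gen_in. exact ha.
      * exists [g]. split; [simpl; lia|exact hg].
    + intros hn. split.
      { constructor; [intros [e|[]]; auto|constructor; [intros []|constructor]]. }
      intros H hH hxyH [l [hl hgen]].
      destruct l as [|g [|g' l]]; [| |simpl in hl; lia].
      * apply hx. apply (gen_nil T G). apply hgen. apply hxyH. left; reflexivity.
      * apply hn. apply cyc_two with g; apply (gen1 T G); apply hgen; apply hxyH; simpl; auto.
Qed.
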